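(* Let $B=(b_{st})$ be an $n\times n$ symmetric matrix over the complex numbers. For $1\le i,j\le n$ let $B_{[ij]}$ be the matrix obtained from $B$ by replacing the entries in positions $(i,j)$ and $(j,i)$ by $0$ (all other entries unchanged), and for $i<j$ let $B^{i,j}_{i,j}$ be the submatrix of $B$ obtained by deleting rows $i,j$ and columns $i,j$. Let $2m$ be the number of nonzero off-diagonal entries of $B$ and let $c$ be the number of zero entries on the diagonal of $B$. Then $$(m-c)\,d_2(B)=\sum_{(i,j)\in I_1} d_2(B_{[ij]})+\sum_{(i,j)\in I_2} b_{ij}^2\, d_2(B^{i,j}_{i,j}),$$ where $I_1=\{(i,j): b_{ij}\ne 0,\ 1\le i\le j\le n\}$ and $I_2=\{(i,j): b_{ij}\ne 0,\ 1\le i<j\le n\}$.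
   Context: For an $n\times n$ matrix $M=(m_{ij})$ ($n\ge 2$), the second immanant is $d_2(M)=\sum_{\sigma\in S_n}\chi_2(\sigma)\prod_{s=1}^n m_{s\sigma(s)}$, where $\chi_2$ is the irreducible character of $S_n$ corresponding to the partition $(2,1^{n-2})$. It satisfies $d_2(X)=\sum_{i=1}^k x_{ii}\det(X(i))-\det(X)$ for a $k\times k$ matrix $X$, where $X(i)$ is $X$ with row and column $i$ deleted; for matrices of order less than $2$, $d_2$ is understood via this identity, with the determinant of the empty matrix equal to $1$. *)

(* Defs.v *)
From HB Require Import structures.
From mathcomp Require Import all_boot all_order all_algebra all_fingroup.
From mathcomp Require Import complex.
From mathcomp Require Import reals.
Set Implicit Arguments. Unset Strict Implicit. Unset Printing Implicit Defensive.
Import Order.TTheory GRing.Theory Num.Theory.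
Local Open Scope ring_scope.

(* Second immanant: character chi_2 of the partition (2,1^{k-2}) is
   sigma |-> sgn(sigma) * (#fixed points of sigma - 1). *)
Definition chi2 (k : nat) (s : 'S_k) : int :=
  (-1) ^+ s * ((#|[set x | s x == x]|)%:Z - 1).

Definition d2 {F : comNzRingType} (k : nat) (A : 'M[F]_k) : F :=
  \sum_(s : 'S_k) (chi2 s)%:~R * \prod_(i < k) A i (s i).

Definition zero_pair {F : comNzRingType} (n : nat) (B : 'M[F]_n) (i j : 'I_n)
  : 'M[F]_n :=
  \matrix_(s, t) (if ((s == i) && (t == j)) || ((s == j) && (t == i))
                  then 0 else B s t).

(* B^{i,j}_{i,j} : delete rows i,j and columns i,j (meaningful for i <> j) *)
Definition minor2 {F : comNzRingType} (n : nat) (B : 'M[F]_n) (i j : 'I_n)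
  : 'M[F]_(n.-1.-1) :=
  match unlift i j with
  | Some j' => row' j' (col' j' (row' i (col' i B)))
  | None => 0
  end.

(* Main.v *)
Require Import Defs.
From HB Require Import structures.
From mathcomp Require Import all_boot all_order all_algebra all_fingroup.
From mathcomp Require Import complex.
From mathcomp Require Import reals.
Import Order.TTheory GRing.Theory Num.Theory.
Local Open Scope ring_scope.
From mathcomp Require Import ring.
Set Implicit Arguments. Unset Strict Implicit. Unset Printing Implicit Defensive.

Lemma fix_del (F : comNzRingType) n (A : 'M[F]_n.+1) (i0 : 'I_n.+1)
  (g : 'S_n.+1 -> F) :
  \sum_(s : 'S_n.+1 | s i0 == i0) g s * \prod_k A k (s k) =
  A i0 i0 * \sum_(t : 'S_n) g (lift_perm i0 i0 t)
      * \prod_k row' i0 (col' i0 A) k (t k).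
Proof.
rewrite (reindex (lift_perm i0 i0)); last first.
  pose ulsf i (s : 'S_n.+1) k := odflt k (unlift (s i) (s (lift i k))).
  have ulsfK i (s : 'S_n.+1) k: lift (s i) (ulsf i s k) = s (lift i k).
    rewrite /ulsf; have:= neq_lift i k.
    by rewrite -(can_eq (permK s)) => /unlift_some[] ? ? ->.
  have inj_ulsf: injective (ulsf i0 _).
    move=> s; apply: can_inj (ulsf (s i0) s^-1%g) _ => k'.
    by rewrite {1}/ulsf ulsfK !permK liftK.
  exists (fun s => perm (inj_ulsf s)) => [s _ | s].
    by apply/permP=> k'; rewrite permE /ulsf lift_perm_lift lift_perm_id liftK.
  move/(s _ =P _) => si0; apply/permP=> k.
  case: (unliftP i0 k) => [k'|] ->; rewrite ?lift_perm_id //.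
  by rewrite lift_perm_lift permE -ulsfK si0.
rewrite big_distrr /=.
apply: eq_big => [s | s _]; first by rewrite lift_perm_id eqxx.
rewrite (bigD1_ord i0) //= lift_perm_id mulrCA; congr (_ * (_ * _)).
by apply: eq_bigr => k _; rewrite !mxE lift_perm_lift.
Qed.

Lemma fix_lift n (s : 'S_n) (i : 'I_n.+1) :
  #|[set x | lift_perm i i s x == x]| = #|[set x | s x == x]|.+1.
Proof.
rewrite (cardsD1 i) inE lift_perm_id eqxx add1n; congr _.+1.
rewrite -(card_imset _ (@lift_inj _ i)).
have -> // : [set x | lift_perm i i s x == x] :\ i = [set lift i x | x in [set x | s x == x]].
apply/setP => y; case: (unliftP i y) => [y'|] ->.
  rewrite !inE eq_sym (negbTE (neq_lift _ _)) /= lift_perm_lift (inj_eq (@lift_inj _ i)) mem_imset ?inE //; exact: lift_inj.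
rewrite !inE eqxx /=; apply/esym/imsetP => -[x _ /eqP]; by rewrite (negbTE (neq_lift _ _)).
Qed.

Lemma fix_swap n (r : 'S_n) (i j : 'I_n) : i != j -> r i = i -> r j = j ->
  #|[set x | (r * tperm i j)%g x == x]|.+2 = #|[set x | r x == x]|.
Proof.
move=> nij ri rj.
rewrite [RHS](cardsD1 i) inE ri eqxx add1n (cardsD1 j) !inE eq_sym nij rj eqxx add1n.
do 2!congr _.+1; apply: eq_card => x; rewrite !inE permM.
have [->|nxi] := eqVneq x i.
  by rewrite ri tpermL (eq_sym j) (negbTE nij) /=.
have [->|nxj] := eqVneq x j; first by rewrite rj tpermR (negbTE nij) eqxx.
rewrite /=.
have rxi : r x != i by rewrite -{1}ri (inj_eq (@perm_inj _ r)).
have rxj : r x != j by rewrite -{1}rj (inj_eq (@perm_inj _ r)).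
by rewrite tpermD // eq_sym.
Qed.

Lemma minor_swap (F : comNzRingType) n (B : 'M[F]_n.+2) (i : 'I_n.+2) (j' : 'I_n.+1) :
  \sum_(s : 'S_n.+2 | (s i == lift i j') && (s (lift i j') == i))
     (chi2 s)%:~R * \prod_k B k (s k)
  = - (B i (lift i j') * B (lift i j') i) * d2 (row' j' (col' j' (row' i (col' i B)))).
Proof.
have nij : i != lift i j' := neq_lift i j'.
pose t := tperm i (lift i j').
pose B' := \matrix_(a, b) B a (t b).
pose h (r : 'S_n.+2) : F :=
  (- ((-1) ^+ r * ((#|[set x | r x == x]|)%:Z - 3)))%:~R.
rewrite (reindex_inj (@mulIg _ t)) /=.
transitivity (\sum_(r : 'S_n.+2 | r i == i)
   (if r (lift i j') == lift i j' then h r else 0) * \prod_k B' k (r k)).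
  rewrite big_mkcond [RHS]big_mkcond; apply: eq_bigr => r _.
  rewrite !permM (canF_eq (tpermK _ _)) tpermR (canF_eq (tpermK _ _)) tpermL.
  case: eqP => ri /=; last by [].
  case: eqP => rj; last by rewrite mul0r.
  congr (_ * _); last by apply: eq_bigr => k _; rewrite !mxE permM.
  rewrite /h /chi2 odd_permM odd_tperm nij signr_addb -(fix_swap nij ri rj).
  congr (_%:~R); rewrite /t; move: #|_| => a.
  rewrite (_ : (-1) ^+ true = -1 :> int) // -[a.+2]addn2 PoszD.
  move: ((-1) ^+ _ : int) => e; ring.
rewrite fix_del.
transitivity (B' i i * \sum_(u : 'S_n.+1 | u j' == j') h (lift_perm i i u)
      * \prod_k row' i (col' i B') k (u k)).
  congr (_ * _); rewrite [RHS]big_mkcond; apply: eq_bigr => u _.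
  rewrite lift_perm_lift (inj_eq (@lift_inj _ i)).
  by case: eqP => //; rewrite mul0r.
rewrite fix_del mulrA !mxE tpermL tpermR mulNr -mulrN /d2 -sumrN.
congr (_ * _); apply: eq_bigr => v _.
rewrite -mulNr; congr (_ * _).
  rewrite /h !fix_lift !odd_lift_perm !addbb /chi2 -mulrNz; congr (_%:~R).
apply: eq_bigr => k _; rewrite !mxE tpermD //.
  exact: neq_lift.
by rewrite (inj_eq (@lift_inj _ i)) neq_lift.
Qed.

Lemma sum_perm_row n (s : 'S_n) :
  (\sum_(p : 'I_n * 'I_n) (s p.1 == p.2))%N = n.
Proof.
rewrite -(pair_bigA _ (fun a b => nat_of_bool (s a == b))) /=.
rewrite (eq_bigr (fun _ => 1%N)); last first.
  move=> a _; rewrite (bigD1 (s a)) //= eqxx big1 // => b nb.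
  by rewrite eq_sym (negbTE nb).
by rewrite big_const_ord iter_addn_0 mul1n.
Qed.

Lemma sum_swap n (G : 'I_n * 'I_n -> nat) :
  (\sum_p G p = \sum_p G (p.2, p.1))%N.
Proof.
have inj : injective (fun p : 'I_n * 'I_n => (p.2, p.1)) by move=> [a b] [c d] [-> ->].
by rewrite (reindex_inj inj).
Qed.

Lemma count_pairs n (s : 'S_n) :
  (\sum_(p : 'I_n * 'I_n | (p.1 <= p.2)%N) ((s p.1 == p.2) || (s p.2 == p.1))
   + \sum_(p : 'I_n * 'I_n | (p.1 < p.2)%N) ((s p.1 == p.2) && (s p.2 == p.1)))%N = n.
Proof.
rewrite (big_mkcond (fun p : 'I_n * 'I_n => (p.1 <= p.2)%N))
        (big_mkcond (fun p : 'I_n * 'I_n => (p.1 < p.2)%N)) -big_split /=.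
transitivity (\sum_(p : 'I_n * 'I_n) ((p.1 <= p.2) * (s p.1 == p.2)
                + (p.1 < p.2) * (s p.2 == p.1)))%N.
  apply: eq_bigr => -[a b] _ /=.
  case: (ltngtP a b) => [h|h|/val_inj h] /=.
  - by case: (s a == b); case: (s b == a).
  - by [].
  - by subst b; case: (s a == a).
rewrite big_split /= [X in (_ + X)%N]sum_swap /= -big_split /=.
rewrite -[RHS](sum_perm_row s); apply: eq_bigr => -[a b] _ /=.
by case: leqP => /=; rewrite ?mul1n ?mul0n ?addn0.
Qed.

Lemma card_count (F : comNzRingType) n (B : 'M[F]_n) :
  (forall a b, B a b = B b a) ->
  (#|[set p : 'I_n * 'I_n | (p.1 != p.2) && (B p.1 p.2 != 0%R)]| %/ 2 + n =
   \sum_(p : 'I_n * 'I_n | (p.1 <= p.2) && (B p.1 p.2 != 0%R)) 1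
   + #|[set k : 'I_n | B k k == 0%R]|)%N.
Proof.
move=> Bs.
pose e (p : 'I_n * 'I_n) := B p.1 p.2 != 0.
have card_sum (P : pred ('I_n * 'I_n)) : #|[set p | P p]| = (\sum_p P p)%N.
  rewrite -sum1_card (big_mkcond (fun p => p \in _)) /=.
  by apply: eq_bigr => p _; rewrite inE; case: (P p).
have card_sum1 (P : pred 'I_n) : #|[set p | P p]| = (\sum_p P p)%N.
  rewrite -sum1_card (big_mkcond (fun p => p \in _)) /=.
  by apply: eq_bigr => p _; rewrite inE; case: (P p).
pose L := (\sum_(p : 'I_n * 'I_n) ((p.1 < p.2) && e p))%N.
have -> : #|[set p : 'I_n * 'I_n | (p.1 != p.2) && (B p.1 p.2 != 0%R)]| = (2 * L)%N.
  rewrite (card_sum (fun p => (p.1 != p.2) && (B p.1 p.2 != 0%R))).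
  rewrite mul2n -addnn /L [X in (_ = (_ + X))%N]sum_swap -big_split /=.
  apply: eq_bigr => -[a b] _ /=; rewrite /e /= (Bs b a).
  case: (ltngtP a b) => [h|h|/val_inj h] /=.
  - by rewrite -(inj_eq val_inj) /= ltn_eqF //; case: (_ != _).
  - by rewrite -(inj_eq val_inj) /= gtn_eqF //; case: (_ != _).
  - by subst b; rewrite eqxx.
rewrite mulKn //.
rewrite (big_mkcond (fun p : 'I_n * 'I_n => (p.1 <= p.2)%N && (B p.1 p.2 != 0%R))) /=.
rewrite (card_sum1 (fun k => B k k == 0%R)).
transitivity (L + \sum_(k < n) (B k k != 0%R) + \sum_(k < n) (B k k == 0%R))%N.
  rewrite -addnA -big_split /= (eq_bigr (fun _ => 1%N)); last first.
    by move=> k _; case: (B k k == 0%R).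
  by rewrite big_const_ord iter_addn_0 mul1n.
congr (_ + _)%N.
have -> : (\sum_(k < n) (B k k != 0%R) =
    \sum_(p : 'I_n * 'I_n) ((p.1 == p.2) && (B p.1 p.2 != 0%R)))%N.
  rewrite -(pair_bigA _ (fun a b => nat_of_bool ((a == b) && (B a b != 0%R)))) /=.
  apply: eq_bigr => a _; rewrite (bigD1 a) //= eqxx big1 ?addn0 // => b nb.
  by rewrite eq_sym (negbTE nb).
rewrite /L -big_split /=; apply: eq_bigr => -[a b] _ /=; rewrite /e /=.
case: (ltngtP a b) => [h|h|/val_inj h] /=.
- by rewrite -(inj_eq val_inj) /= ltn_eqF //; case: (_ != _).
- by rewrite -(inj_eq val_inj) /= gtn_eqF //.
- by subst b; rewrite eqxx; case: (_ != _).
Qed.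

Lemma zp_expand (F : comNzRingType) n (B : 'M[F]_n) (i j : 'I_n) :
  d2 (zero_pair B i j) = d2 B - \sum_(s : 'S_n) (chi2 s)%:~R *
     (((s i == j) || (s j == i))%:R * \prod_k B k (s k)).
Proof.
rewrite /d2 -sumrB; apply: eq_bigr => s _; rewrite -mulrBr; congr (_ * _).
have [u|nu] := boolP ((s i == j) || (s j == i)).
  rewrite mul1r subrr; case/orP: u => /eqP e.
    by rewrite (bigD1 i) //= mxE e !eqxx /= mul0r.
  by rewrite (bigD1 j) //= mxE e !eqxx /= orbT mul0r.
rewrite mul0r subr0; apply: eq_bigr => k _; rewrite mxE.
case: ifP => // /orP[/andP[/eqP ki /eqP e]|/andP[/eqP kj /eqP e]].
  by move: nu; rewrite -ki e eqxx.
by move: nu; rewrite -kj e eqxx orbT.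
Qed.

Lemma minor2_expand (F : comNzRingType) n (B : 'M[F]_n) (i j : 'I_n) :
  i != j -> B i j = B j i ->
  B i j ^+ 2 * d2 (minor2 B i j) = - \sum_(s : 'S_n) (chi2 s)%:~R *
     (((s i == j) && (s j == i))%:R * \prod_k B k (s k)).
Proof.
case: n B i j => [|[|n]] B i j; first by case: i.
  by rewrite !ord1 eqxx.
move=> nij Bij; rewrite /minor2.
case: (unliftP i j) => [j'|] ej; last by rewrite ej eqxx in nij.
subst j; rewrite expr2 {2}Bij -[LHS]opprK -mulNr -minor_swap; congr (- _).
rewrite big_mkcond; apply: eq_bigr => s _.
by case: ifP => _; rewrite ?mul1r ?mul0r ?mulr0.
Qed.

Theorem lemma2p4 (R : realType) (n : nat) (B : 'M[R[i]]_n) :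
  B^T = B ->
  let m := (#|[set p : 'I_n * 'I_n | (p.1 != p.2) && (B p.1 p.2 != 0%R)]| %/ 2)%N in
  let c := #|[set k : 'I_n | B k k == 0%R]| in
  (m%:R - c%:R) * d2 B =
    \sum_(p : 'I_n * 'I_n | (p.1 <= p.2)%N && (B p.1 p.2 != 0))
        d2 (zero_pair B p.1 p.2)
  + \sum_(p : 'I_n * 'I_n | (p.1 < p.2)%N && (B p.1 p.2 != 0))
        B p.1 p.2 ^+ 2 * d2 (minor2 B p.1 p.2).
Proof.
move=> BT m c.
have Bs a b : B a b = B b a by rewrite -{1}BT mxE.
pose w (s : 'S_n) := \prod_k B k (s k).
pose x (s : 'S_n) : R[i] := (chi2 s)%:~R * w s.
pose K1 := (\sum_(p : 'I_n * 'I_n | (p.1 <= p.2)%N && (B p.1 p.2 != 0%R)) 1)%N.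
pose N1 (s : 'S_n) := (\sum_(p : 'I_n * 'I_n | (p.1 <= p.2)%N && (B p.1 p.2 != 0%R))
   ((s p.1 == p.2) || (s p.2 == p.1)))%N.
pose N2 (s : 'S_n) := (\sum_(p : 'I_n * 'I_n | (p.1 < p.2)%N && (B p.1 p.2 != 0%R))
   ((s p.1 == p.2) && (s p.2 == p.1)))%N.
have S1 : \sum_(p : 'I_n * 'I_n | (p.1 <= p.2)%N && (B p.1 p.2 != 0%R))
        d2 (zero_pair B p.1 p.2) = K1%:R * d2 B - \sum_s x s * (N1 s)%:R.
  rewrite (eq_bigr _ (fun p _ => zp_expand B p.1 p.2)) sumrB; congr (_ - _).
    by rewrite natr_sum big_distrl /=; apply: eq_bigr => p _; rewrite mul1r.
  rewrite exchange_big /=; apply: eq_bigr => s _.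
  rewrite natr_sum mulr_sumr; apply: eq_bigr => p _; rewrite /x /w; ring.
have S2 : \sum_(p : 'I_n * 'I_n | (p.1 < p.2)%N && (B p.1 p.2 != 0%R))
        B p.1 p.2 ^+ 2 * d2 (minor2 B p.1 p.2) = - \sum_s x s * (N2 s)%:R.
  rewrite (eq_bigr (fun p => - \sum_(s : 'S_n) (chi2 s)%:~R *
     (((s p.1 == p.2) && (s p.2 == p.1))%:R * w s))); last first.
    move=> p /andP[lt _]; apply: minor2_expand; last exact: Bs.
    by rewrite -(inj_eq val_inj) /= ltn_eqF.
  rewrite sumrN exchange_big /=; congr (- _); apply: eq_bigr => s _.
  rewrite natr_sum mulr_sumr; apply: eq_bigr => p _; rewrite /x /w; ring.
rewrite S1 S2.
have hc : (m + n = K1 + c)%N := card_count Bs.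
have -> : d2 B = \sum_s x s by [].
rewrite mulr_sumr mulr_sumr -!sumrB; apply: eq_bigr => s _.
have [ws|ws] := eqVneq (w s) 0; first by rewrite /x ws; ring.
have nz k : B k (s k) != 0.
  by apply: contra ws => /eqP z; apply/prodf_eq0; exists k => //; rewrite z.
have e1 : N1 s = (\sum_(p : 'I_n * 'I_n | (p.1 <= p.2)%N)
   ((s p.1 == p.2) || (s p.2 == p.1)))%N.
  rewrite /N1 big_mkcond [RHS]big_mkcond; apply: eq_bigr => -[a b] _ /=.
  case: (a <= b)%N => //=; case Hab: (B a b != 0%R) => //=.
  move/negbFE/eqP: Hab => Bab.
  apply/esym/eqP; rewrite eqb0 negb_or; apply/andP; split; apply/eqP => e.
    by move: (nz a); rewrite e Bab eqxx.
  by move: (nz b); rewrite e Bs Bab eqxx.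
have e2 : N2 s = (\sum_(p : 'I_n * 'I_n | (p.1 < p.2)%N)
   ((s p.1 == p.2) && (s p.2 == p.1)))%N.
  rewrite /N2 big_mkcond [RHS]big_mkcond; apply: eq_bigr => -[a b] _ /=.
  case: (a < b)%N => //=; case Hab: (B a b != 0%R) => //=.
  move/negbFE/eqP: Hab => Bab.
  apply/esym/eqP; rewrite eqb0 negb_and; apply/orP; left; apply/eqP => e.
  by move: (nz a); rewrite e Bab eqxx.
have h1 : (N1 s + N2 s = n)%N by rewrite e1 e2 count_pairs.
have := congr1 (fun k => k%:R : R[i]) h1; rewrite natrD => h1'.
have := congr1 (fun k => k%:R : R[i]) hc; rewrite !natrD => hc'.
have E1 : (K1%:R : R[i]) = m%:R + n%:R - c%:R by rewrite hc' addrK.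
have E2 : ((N2 s)%:R : R[i]) = n%:R - (N1 s)%:R.
  by rewrite -h1' addrAC subrr add0r.
rewrite E1 E2; ring.
Qed.
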